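(* Let $\mathbb{F}$ be a field of characteristic $2$, $V$ a finite-dimensional $\mathbb{F}$-vector space and $b$ a non-degenerate symmetric bilinear form on $V$. Let $\mathcal{V}$ be a linear subspace of $\mathcal{S}_b$ all of whose elements are nilpotent. Let $x \in V\setminus\{0\}$ with $b(x,x)=0$, let $u \in \mathcal{V}$ with $b(x,u(x))=0$, and let $y \in \{x\}^\perp \setminus \mathbb{F}x$ be such that $x \wedge_b y \in \mathcal{V}$. Then $b_a(u(x), y) = 0$.
   Context: $\mathcal{S}_b$ is the space of $b$-symmetric endomorphisms of $V$ (those $u$ for which $(z,w)\mapsto b(z,u(w))$ is symmetric). $\{x\}^\perp=\{z\in V: b(x,z)=0\}$. For $x,y\in V$, $x \wedge_b y$ is the endomorphism $z \mapsto b(y,z)\,x - b(x,z)\,y$. With $Q(z)=b(z,z)$ and $\sqrt{\cdot}$ the (unique) square root in an algebraic closure $\overline{\mathbb{F}}$ of $\mathbb{F}$, the a-transform of $b$ is $b_a(z,w) := b(z,w) + \sqrt{Q(z)Q(w)} \in \overline{\mathbb{F}}$. *)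

(* Defs.v *)
From HB Require Import structures.
From mathcomp Require Import all_boot all_order all_algebra all_field.
Set Implicit Arguments. Unset Strict Implicit. Unset Printing Implicit Defensive.
Import GRing.Theory.
Local Open Scope ring_scope.

Section CharTwoForms.
Variables (F : fieldType) (V : vectType F).

Definition bilinear_bform (b : V -> V -> F) : Prop :=
  (forall (a : F) (x y z : V), b (a *: x + y) z = a * b x z + b y z) /\
  (forall (a : F) (x y z : V), b z (a *: x + y) = a * b z x + b z y).

Definition symmetric_bform (b : V -> V -> F) : Prop := forall x y, b x y = b y x.

Definition nondegenerate_bform (b : V -> V -> F) : Prop :=
  forall x, (forall y, b x y = 0) -> x = 0.

Definition b_symmetric (b : V -> V -> F) (u : 'End(V)) : Prop :=
  forall z w, b z (u w) = b w (u z).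

Definition nilpotent_end (u : 'End(V)) : Prop :=
  exists n : nat, forall v, iter n u v = 0.

Definition wedge_b (b : V -> V -> F) (x y : V) : 'End(V) :=
  linfun (fun z => b y z *: x - b x z *: y).

Definition Qform (b : V -> V -> F) (z : V) : F := b z z.
End CharTwoForms.

Lemma closed_sqrt_ex (L : closedFieldType) (a : L) : exists r : L, r * r == a.
Proof.
have [r Hr] := @solve_monicpoly L 2 (nth 0 [:: a]) isT.
exists r; apply/eqP; rewrite -expr2 Hr big_ord_recl big_ord1 /=.
by rewrite /= mul0r addr0 expr0 mulr1.
Qed.

Definition csqrt (L : closedFieldType) (a : L) : L := xchoose (closed_sqrt_ex a).

(* a-transform b_a(z,w) = b(z,w) + sqrt(Q(z)Q(w)), computed in an
   algebraically closed field L containing F via iota *)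
Definition a_transform (F : fieldType) (V : vectType F) (L : closedFieldType)
  (iota : {rmorphism F -> L}) (b : V -> V -> F) (z w : V) : L :=
  iota (b z w) + csqrt (iota (Qform b z * Qform b w)).

(* Main.v *)
Require Import Defs.
From HB Require Import structures.
From mathcomp Require Import all_boot all_order all_algebra all_field.
From mathcomp Require Import ring.
Import GRing.Theory.
Local Open Scope ring_scope.

Section Aux.
Variables (F : fieldType) (V : vectType F) (b : V -> V -> F).
Hypothesis bl : bilinear_bform b.
Hypothesis bs : symmetric_bform b.
Variable u : 'End(V).
Hypothesis usym : b_symmetric b u.
Variables (L : closedFieldType) (iota : {rmorphism F -> L}).
Variable k : nat.
Hypothesis uK : forall v, iter k.+1 u v = 0.

Lemma b0l w : b 0 w = 0.
Proof.
have h := bl.1 1 0 0 w; rewrite scaler0 addr0 mul1r in h.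
have : b 0 w + b 0 w = b 0 w + 0 by rewrite addr0 -h.
by move/addrI.
Qed.

Lemma b0r w : b w 0 = 0.
Proof. by rewrite bs b0l. Qed.

Lemma blD z1 z2 w : b (z1 + z2) w = b z1 w + b z2 w.
Proof. by have := bl.1 1 z1 z2 w; rewrite scale1r mul1r. Qed.

Lemma blZ a z w : b (a *: z) w = a * b z w.
Proof. by have := bl.1 a z 0 w; rewrite addr0 b0l addr0. Qed.

Lemma blN z w : b (- z) w = - b z w.
Proof. by rewrite -scaleN1r blZ mulN1r. Qed.

Lemma bU z w : b (u z) w = b z (u w).
Proof. by rewrite bs usym. Qed.

Lemma bsymiter j z w : b z (iter j u w) = b w (iter j u z).
Proof.
elim: j z w => [|j IH] z w /=; first exact: bs.
by rewrite usym bs IH -iterSr.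
Qed.

Definition E z w (s : L) := \sum_(j < k.+1) iota (b z (iter j u w)) * s ^+ j.+1.

Lemma EA z1 z2 w s : E (z1 + z2) w s = E z1 w s + E z2 w s.
Proof.
rewrite /E -big_split; apply: eq_bigr => j _.
by rewrite blD rmorphD mulrDl.
Qed.

Lemma EZ a z w s : E (a *: z) w s = iota a * E z w s.
Proof.
rewrite /E mulr_sumr; apply: eq_bigr => j _.
by rewrite blZ rmorphM mulrA.
Qed.

Lemma EN z w s : E (- z) w s = - E z w s.
Proof. by rewrite -scaleN1r EZ rmorphN1 mulN1r. Qed.

Lemma E0 w s : E 0 w s = 0.
Proof. by rewrite /E big1 // => j _; rewrite b0l rmorph0 mul0r. Qed.

Lemma Esym z w s : E z w s = E w z s.
Proof. by apply: eq_bigr => j _; rewrite bsymiter. Qed.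

Lemma Eshift z w s : s * E (u z) w s = E z w s - s * iota (b z w).
Proof.
rewrite /E mulr_sumr big_ord_recr /= bU -iterS uK b0r rmorph0 mul0r mulr0 addr0.
rewrite big_ord_recl /= expr1 [s * _]mulrC addrAC subrr add0r.
apply: eq_bigr => i _; rewrite bU -iterS.
by rewrite [s ^+ i.+2]exprS mulrCA.
Qed.

Variables (x y : V) (M : nat).
Hypothesis hN : forall v, iter M (u + wedge_b b x y : 'End(V)) v = 0.

Lemma wedgeE z : wedge_b b x y z = b y z *: x - b x z *: y.
Proof.
pose f := fun z0 => b y z0 *: x - b x z0 *: y.
have lin : linear f.
  move=> a z1 z2; rewrite /f !bl.2.
  by rewrite !scalerDl scalerBr !scalerA opprD addrACA.
pose fL : {linear V -> V} := HB.pack f (GRing.isLinear.Build _ _ _ _ f lin).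
exact: (lfunE fL).
Qed.

Lemma noroot s :
  E x x s * E y y s - (E x y s - 1) * (E x y s + 1) != 0.
Proof.
apply/negP => /eqP D0.
set X := E x x s in D0; set Y := E y y s in D0; set r := E x y s in D0.
have XY : X * Y = (r - 1) * (r + 1) by apply/eqP; rewrite -subr_eq0 D0.
have Eyx : E y x s = r by rewrite Esym.
have [al [be [nz [e1 e2]]]] : exists al be, ((al != 0) || (be != 0)) /\
   al * X + be * r = be /\ al * r + be * Y = - al.
  case: (boolP ((r != 1) || (X != 0))) => hA.
    exists (1 - r), X; split.
      by case/orP: hA => h; apply/orP; [left; rewrite subr_eq0 eq_sym|right].
    by split; [ring | rewrite [X * Y]mulrC in XY *; rewrite XY; ring].
  move: hA; rewrite negb_or !negbK => /andP [/eqP r1 /eqP X0].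
  case: (boolP ((Y != 0) || (r != -1))) => hB.
    exists Y, (- (r + 1)); split.
      case/orP: hB => h; apply/orP; [left => // | right].
      by rewrite oppr_eq0 addr_eq0.
    by split; [rewrite [Y * X]mulrC XY; ring | ring].
  move: hB; rewrite negb_or !negbK => /andP [/eqP Y0 /eqP rN].
  exists 1, 0; split; first by rewrite oner_eq0.
  by rewrite X0 rN; split; ring.
pose phi z := al * E z x s + be * E z y s.
have phix : phi x = be by rewrite /phi -/X -/r.
have phiy : phi y = - al by rewrite /phi Eyx -/Y.
have key : forall z, s * phi ((u + wedge_b b x y : 'End(V)) z) = phi z.
  move=> z; rewrite add_lfunE wedgeE.
  have -> : phi (u z + (b y z *: x - b x z *: y)) =
     phi (u z) + iota (b y z) * phi x - iota (b x z) * phi y.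
    by rewrite /phi !EA EN !EZ EN !EZ; ring.
  have sh : s * phi (u z) = phi z - s * (al * iota (b z x) + be * iota (b z y)).
    by rewrite /phi mulrDr mulrCA [s * (be * _)]mulrCA !Eshift; ring.
  rewrite phix phiy mulrDr mulrDr sh [b z x]bs [b z y]bs; ring.
have itk : forall j z, s ^+ j * phi (iter j (u + wedge_b b x y : 'End(V)) z) = phi z.
  elim=> [|j IH] z; first by rewrite expr0 mul1r.
  by rewrite iterSr exprS -mulrA IH key.
have phi0 : forall z, phi z = 0.
  move=> z; rewrite -(itk M z) hN /phi !E0 !mulr0 addr0 mulr0 //.
move: nz; rewrite -phix -oppr_eq0 -phiy !phi0 eqxx.
done.
Qed.


Definition cf z w i := if i is j.+1 then iota (b z (iter j u w)) else 0.
Definition Pp z w : {poly L} := \poly_(i < k.+2) cf z w i.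

Lemma Pp_horner z w s : (Pp z w).[s] = E z w s.
Proof.
rewrite /Pp horner_poly big_ord_recl /= mul0r add0r.
by apply: eq_bigr => i _.
Qed.

Lemma coef4 : (3 <= k)%N -> b x x = 0 -> b x (u x) = 0 -> b x y = 0 ->
  iota (b (u x) (u x)) * iota (b y y) = iota (b (u x) y) ^+ 2.
Proof.
move=> k3 bxx bxux bxy.
pose Pd := Pp x x * Pp y y - (Pp x y - 1) * (Pp x y + 1).
have hs : size Pd == 1.
  apply/negPn/negP => /closed_rootP [s /rootP].
  rewrite !hornerE !Pp_horner => /eqP; rewrite (negbTE (noroot s)) //.
have c4 : Pd`_4 = 0 by rewrite nth_default // (eqP hs).
have cP : forall z w i, (i < 5)%N -> (Pp z w)`_i = cf z w i.
  by move=> z w i hi; rewrite /Pp coef_poly (leq_trans hi) // !ltnS.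
move: c4; rewrite /Pd (coefB (Pp x x * Pp y y)) !coefM !big_ord_recr !big_ord0 /=.
rewrite !subnn !subn0 (_ : (4 - 1 = 3)%N) // (_ : (4 - 2 = 2)%N) // (_ : (4 - 3 = 1)%N) //.
rewrite !(coefB (Pp x y)) !(coefD (Pp x y)) !coef1 !cP //=.
rewrite bxx bxux bxy rmorph0 (usym x (u x)) (usym x y) [b y (u x)]bs => h.
apply/eqP; rewrite -subr_eq0; apply/eqP; rewrite -h; ring.
Qed.
End Aux.

Lemma sq2 (L : closedFieldType) (r c : L) : 2%:R = 0 :> L -> r * r = c ^+ 2 -> c + r = 0.
Proof.
move=> two0 rr.
have : (r + c) * (r + c) = 0.
  transitivity (r * r + c * c + 2%:R * (r * c)); first by ring.
  by rewrite two0 mul0r addr0 rr expr2 -mulr2n -mulr_natr two0 mulr0.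
by move/eqP; rewrite mulf_eq0 orbb addrC => /eqP.
Qed.

Theorem lemma4p10 (F : fieldType) (V : vectType F) (b : V -> V -> F)
  (Vs : {vspace 'End(V)}) (x : V) (u : 'End(V)) (y : V) :
  (2%N \in [pchar F]) ->
  bilinear_bform b -> symmetric_bform b -> nondegenerate_bform b ->
  (forall v, v \in Vs -> b_symmetric b v) ->
  (forall v, v \in Vs -> nilpotent_end v) ->
  x != 0 -> b x x = 0 ->
  u \in Vs -> b x (u x) = 0 ->
  b x y = 0 -> y \notin <[x]>%VS ->
  wedge_b b x y \in Vs ->
  forall (L : closedFieldType) (iota : {rmorphism F -> L}),
    a_transform iota b (u x) y = 0.
Proof.
move=> ch bl bs nd hsym hnil hx0 hxx huV hxux hxy hyx hwV L iota.
have usym := hsym u huV.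
have [m hm] := hnil u huV.
have [M hM] := hnil _ (memvD huV hwV).
have uK : forall v, iter (m.+3).+1 u v = 0 by move=> v; rewrite !iterS hm !linear0.
have := @coef4 F V b bl bs u usym L iota _ uK x y M hM (isT : (2 < m.+3)%N) hxx hxux hxy.
move=> h.
have two0 : (2%:R : L) = 0 by rewrite -(rmorph_nat iota) (pcharf0 ch) rmorph0.
rewrite /a_transform /csqrt /Qform rmorphM h.
exact: (@sq2 _ _ _ two0 (eqP (xchooseP (closed_sqrt_ex (iota (b (u x) y) ^+ 2))))).
Qed.
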